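(* Let $K$ be a finite field of odd characteristic and $d:V\times V\to K$ a non-degenerate symmetric bilinear form with $n=\dim V$. Let $\mathcal{X},\mathcal{Y}$ be orthogonal bases of $d$ (viewed as sets of $1$-dimensional subspaces) with addresses $(n-s:s)$ and $(n-r:r)$ respectively. (i) If $n$ is odd, then $\mathcal{X}\varphi=\mathcal{Y}$ for some $(\varphi,\hat\varphi)\in\operatorname{Isom}^*(d)$ if and only if $s=r$. (ii) If $n$ is even, then $\mathcal{X}\varphi=\mathcal{Y}$ for some $(\varphi,\hat\varphi)\in\operatorname{Isom}^*(d)$ if and only if $s=r$ or $s=n-r$.
   Context: An orthogonal basis of $d$ is a basis $\{x_1,\dots,x_n\}$ of $V$ with $d(x_i,x_j)=0$ for $i\ne j$; it is identified with the set $\{\langle x_i\rangle\}$ of lines, and $\mathcal{X}\varphi=\{X\varphi:X\in\mathcal{X}\}$. Its address is $(n-s:s)$ where $s$ is the number of $i$ for which $d(x_i,x_i)$ is a non-square in $K$. $\operatorname{Isom}^*(d)=\{(\varphi,\hat\varphi)\in\mathrm{GL}(V)\times K^\times: d(u\varphi,v\varphi)=\hat\varphi\, d(u,v)\ \forall u,v\}$. *)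

(* Defs.v *)
From HB Require Import structures.
From mathcomp Require Import all_boot all_order all_algebra.
Set Implicit Arguments. Unset Strict Implicit. Unset Printing Implicit Defensive.
Import Order.TTheory GRing.Theory Num.Theory.
Local Open Scope ring_scope.

Definition is_bilinear_form (K : fieldType) (n : nat) (d : 'rV[K]_n -> 'rV[K]_n -> K) :=
  (forall (a : K) u v w, d (a *: u + v) w = a * d u w + d v w) /\
  (forall (a : K) u v w, d u (a *: v + w) = a * d u v + d u w).

Definition my_symmetric_form (K : fieldType) (n : nat) (d : 'rV[K]_n -> 'rV[K]_n -> K) :=
  forall u v, d u v = d v u.

Definition my_nondegenerate_form (K : fieldType) (n : nat) (d : 'rV[K]_n -> 'rV[K]_n -> K) :=
  forall u, (forall v, d u v = 0) -> u = 0.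

Definition my_orthogonal_basis (K : fieldType) (n : nat) (d : 'rV[K]_n -> 'rV[K]_n -> K)
  (x : 'I_n -> 'rV[K]_n) :=
  row_free (\matrix_i x i) /\ (forall i j, i != j -> d (x i) (x j) = 0).

Definition is_square (K : finFieldType) (a : K) : bool := [exists k : K, k ^+ 2 == a].

(* the s in the address (n-s:s): number of i with d(x_i,x_i) a non-square *)
Definition address_s (K : finFieldType) (n : nat) (d : 'rV[K]_n -> 'rV[K]_n -> K)
  (x : 'I_n -> 'rV[K]_n) : nat :=
  #|[set i : 'I_n | ~~ is_square (d (x i) (x i))]|.

(* (phi, phihat) in Isom*(d): phi in GL(V) (u |-> u *m A, A invertible),
   phihat in K^x, d(u phi, v phi) = phihat d(u,v). *)
Definition in_Isom_star (K : fieldType) (n : nat) (d : 'rV[K]_n -> 'rV[K]_n -> K)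
  (A : 'M[K]_n) (c : K) :=
  A \in unitmx /\ c != 0 /\ (forall u v, d (u *m A) (v *m A) = c * d u v).

(* X phi = Y as sets of lines {<x_i>}: every line <x_i phi> is some <y_j>
   and every <y_j> is some <x_i phi>. *)
Definition maps_lines_onto (K : fieldType) (n : nat) (x y : 'I_n -> 'rV[K]_n)
  (A : 'M[K]_n) :=
  (forall i, exists j, (x i *m A == y j)%MS) /\
  (forall j, exists i, (x i *m A == y j)%MS).

(* Main.v *)
Require Import Defs.
From HB Require Import structures.
From mathcomp Require Import all_boot all_order all_algebra.
From mathcomp Require Import fingroup perm cyclic finfield.
Set Implicit Arguments. Unset Strict Implicit. Unset Printing Implicit Defensive.
Import Order.TTheory GRing.Theory Num.Theory.
Local Open Scope ring_scope.

Section Sq.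
Variable K : finFieldType.
Hypothesis h2 : (2%:R : K) != 0.
Let N := #|K|.-1.

Lemma unitN1 (x : K) : x != 0 -> x ^+ N = 1.
Proof.
move=> nz; have := expf_card x; rewrite /N.
have : (0 < #|K|)%N by apply/card_gt0P; exists 0.
case: #|K| => // m _ /=; rewrite exprS => H.
by apply: (mulfI nz); rewrite mulr1.
Qed.

Lemma ex_prim : exists z : K, N.-primitive_root z.
Proof.
have Npos : (0 < N)%N.
  rewrite /N -(cardC1 (0:K)); apply/card_gt0P; exists 1; rewrite !inE oner_eq0 //.
have [||| z _ Hz] := hasP (@has_prim_root K N (enum (predC1 (0:K))) Npos _ _ _).
- by apply/allP => x; rewrite mem_enum !inE unity_rootE => /unitN1 ->.
- exact: enum_uniq.
- by rewrite -cardE cardC1.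
by exists z.
Qed.

Section Z.
Variable z : K.
Hypothesis Hz : N.-primitive_root z.

Lemma Neven : ~~ odd N.
Proof.
apply/negP => oN.
have m1 : (-1 : K) != 0 by rewrite oppr_eq0 oner_eq0.
have [i Hi] := prim_rootP Hz (unitN1 m1).
have : (N %| i * 2)%N.
  by rewrite (prim_order_dvd Hz) exprM -Hi expr2 mulrNN mulr1.
rewrite Gauss_dvdl ?coprimen2 // (prim_order_dvd Hz) -Hi => /eqP h.
move: h2; rewrite (_ : 2%:R = 1 - (-1 : K)); last by rewrite opprK.
by rewrite h subrr eqxx.
Qed.
Lemma zpow_nz i : z ^+ i != 0.
Proof.
rewrite expf_eq0; apply/negP => /andP[_ /eqP z0].
have := prim_expr_order Hz; have Npos := prim_order_gt0 Hz.
by rewrite z0 expr0n (gtn_eqF Npos) => /eqP; rewrite eq_sym oner_eq0.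
Qed.

Lemma sqE i : is_square (z ^+ i) = ~~ odd i.
Proof.
apply/existsP/idP => [[k /eqP hk]|oi].
  have knz : k != 0 by apply/eqP => k0; move: (zpow_nz i); rewrite -hk k0 expr0n eqxx.
  have [j Hj] := prim_rootP Hz (unitN1 knz).
  move: hk; rewrite Hj -exprM => /eqP; rewrite (eq_prim_root_expr Hz) => /eqP e.
  by rewrite -(odd_mod i (negbTE Neven)) -e (odd_mod _ (negbTE Neven)) oddM andbF.
exists (z ^+ i./2); rewrite -exprM; move: oi; rewrite -{3}(odd_double_half i).
by move/negbTE => ->; rewrite add0n -muln2.
Qed.

End Z.
End Sq.
Section Sq2.
Variable K : finFieldType.
Hypothesis h2 : (2%:R : K) != 0.

Lemma sq_mul (a b : K) : a != 0 -> b != 0 ->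
  is_square (a * b) = (is_square a == is_square b).
Proof.
move=> an bn; have [z Hz] := ex_prim K.
have [i ->] := prim_rootP Hz (unitN1 an).
have [j ->] := prim_rootP Hz (unitN1 bn).
rewrite -exprD !(sqE h2 Hz) oddD.
by case: (odd i); case: (odd j).
Qed.

Lemma ex_nonsq : exists e : K, ~~ is_square e.
Proof.
have [z Hz] := ex_prim K; exists z.
by rewrite -(expr1 z) (sqE h2 Hz).
Qed.

Lemma sq_sqr (k : K) : is_square (k ^+ 2).
Proof. by apply/existsP; exists k. Qed.
End Sq2.

Lemma perm_exists (T : finType) (A B : {set T}) : #|A| = #|B| ->
  exists s : {perm T}, forall i, (s i \in B) = (i \in A).
Proof.
move=> hAB.
have hCAB : #|~: A| = #|~: B|.
  by apply/eqP; rewrite -(eqn_add2l #|A|) cardsC hAB cardsC.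
pose sA := enum A ++ enum (~: A); pose sB := enum B ++ enum (~: B).
have memA i : i \in sA by rewrite mem_cat !mem_enum inE; case: (i \in A).
have szA : size sA = #|T| by rewrite size_cat -!cardE cardsC.
have szB : size sB = #|T| by rewrite size_cat -!cardE cardsC.
have uB : uniq sB.
  rewrite cat_uniq !enum_uniq /= andbT; apply/hasPn => j.
  by rewrite !mem_enum inE => /negbTE ->.
pose f i := nth i sB (index i sA).
have ltf i : (index i sA < size sB)%N by rewrite szB -szA index_mem.
have finj : injective f.
  move=> i j; rewrite /f (set_nth_default i _ (ltf j)) => /eqP.
  by rewrite nth_uniq // => /eqP; apply: (index_inj i (memA i) (memA j)).
exists (perm finj) => i; rewrite permE /f /sA /sB index_cat nth_cat mem_enum -!cardE -hAB.
case iA: (i \in A).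
  have lt : (index i (enum A) < #|A|)%N by rewrite cardE index_mem mem_enum.
  rewrite lt -mem_enum; apply: mem_nth; by rewrite -cardE -hAB.
rewrite ltnNge leq_addr /= addKn.
have iC : i \in enum (~: A) by rewrite mem_enum inE iA.
have : nth i (enum (~: B)) (index i (enum (~: A))) \in enum (~: B).
  by apply: mem_nth; rewrite -cardE -hCAB cardE index_mem.
by rewrite mem_enum inE => /negbTE.
Qed.

Section LA.
Variables (K : finFieldType) (n : nat) (d : 'rV[K]_n -> 'rV[K]_n -> K).
Hypothesis bil : is_bilinear_form d.
Hypothesis nd : my_nondegenerate_form d.

Lemma d0l w : d 0 w = 0.
Proof.
have := bil.1 1 0 0 w; rewrite scale1r addr0 mul1r => h.
by apply: (@addrI _ (d 0 w)); rewrite addr0 -h.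
Qed.
Lemma d0r w : d w 0 = 0.
Proof.
have := bil.2 1 w 0 0; rewrite scale1r addr0 mul1r => h.
by apply: (@addrI _ (d w 0)); rewrite addr0 -h.
Qed.
Lemma dZl a u w : d (a *: u) w = a * d u w.
Proof. by have := bil.1 a u 0 w; rewrite addr0 d0l addr0. Qed.
Lemma dZr a u w : d w (a *: u) = a * d w u.
Proof. by have := bil.2 a w u 0; rewrite addr0 d0r addr0. Qed.
Lemma dDl u v w : d (u + v) w = d u w + d v w.
Proof. by have := bil.1 1 u v w; rewrite scale1r mul1r. Qed.
Lemma dDr u v w : d w (u + v) = d w u + d w v.
Proof. by have := bil.2 1 w u v; rewrite scale1r mul1r. Qed.

Lemma d_suml (a : 'I_n -> K) (z : 'I_n -> 'rV[K]_n) w :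
  d (\sum_i a i *: z i) w = \sum_i a i * d (z i) w.
Proof.
symmetry; apply: (big_rec2 (fun (s : K) (u : 'rV_n) => s = d u w)).
  by rewrite d0l.
by move=> i s u _ ->; rewrite dDl dZl.
Qed.
Lemma d_sumr (a : 'I_n -> K) (z : 'I_n -> 'rV[K]_n) w :
  d w (\sum_i a i *: z i) = \sum_i a i * d w (z i).
Proof.
symmetry; apply: (big_rec2 (fun (s : K) (u : 'rV_n) => s = d w u)).
  by rewrite d0r.
by move=> i s u _ ->; rewrite dDr dZr.
Qed.

Lemma orth_sum (z : 'I_n -> 'rV[K]_n) (a b : 'I_n -> K) :
  (forall i j, i != j -> d (z i) (z j) = 0) ->
  d (\sum_i a i *: z i) (\sum_k b k *: z k) = \sum_i a i * b i * d (z i) (z i).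
Proof.
move=> oz; rewrite d_suml; apply: eq_bigr => i _; rewrite d_sumr (bigD1 i) //=.
rewrite big1 => [|k ki]; first by rewrite addr0 mulrA.
by rewrite oz ?mulr0 // eq_sym.
Qed.

Lemma span (x : 'I_n -> 'rV[K]_n) u : row_free (\matrix_i x i) ->
  u = \sum_i (u *m invmx (\matrix_i x i)) 0 i *: x i.
Proof.
rewrite row_free_unit => uX.
rewrite -{1}[u]mulmx1 -(mulVmx uX) mulmxA mulmx_sum_row.
by apply: eq_bigr => i _; rewrite rowK.
Qed.

Lemma dx_nz x i : my_orthogonal_basis d x -> d (x i) (x i) != 0.
Proof.
case=> fx ox; apply/eqP => h0.
have xi0 : x i = 0.
  apply: nd => v; rewrite (span v fx) d_sumr big1 // => k _.
  by case: (eqVneq i k) => [<-|ik]; rewrite ?h0 ?ox ?mulr0.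
move: fx; rewrite row_free_unit => uX.
have : row i (\matrix_j x j) = 0 by rewrite rowK.
rewrite rowE.
move/(congr1 (mulmx^~ (invmx (\matrix_j x j)))).
rewrite -mulmxA mulmxV // mulmx1 mul0mx => /matrixP/(_ 0 i).
by rewrite !mxE !eqxx /= => /eqP; rewrite oner_eq0.
Qed.

Hypothesis h2 : (2%:R : K) != 0.

Lemma sq1 : is_square (1 : K).
Proof. by have := sq_sqr (1:K); rewrite expr1n. Qed.

Lemma prod_par (a : 'I_n -> K) : (forall i, a i != 0) ->
  ~~ is_square (\prod_i a i) = odd #|[set i | ~~ is_square (a i)]|.
Proof.
move=> anz.
have [_ ->] : (\prod_i a i != 0) /\
   ~~ is_square (\prod_i a i) = odd (\sum_i (~~ is_square (a i) : nat)).
  apply: (big_ind2 (fun (p : K) (k : nat) => p != 0 /\ ~~ is_square p = odd k)).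
  - by rewrite oner_neq0 sq1.
  - move=> p1 k1 p2 k2 [n1 e1] [n2 e2]; rewrite mulf_neq0 //; split => //.
    rewrite sq_mul // oddD -e1 -e2.
    by case: (is_square p1); case: (is_square p2).
  - by move=> i _; split => //; case: is_square.
congr odd; rewrite -sum1_card [RHS]big_mkcond; apply: eq_bigr => i _.
by rewrite inE; case: is_square.
Qed.

Lemma parity x y : my_orthogonal_basis d x -> my_orthogonal_basis d y ->
  odd (address_s d x) = odd (address_s d y).
Proof.
move=> bx by_; have [fx ox] := bx; have [fy oy] := by_.
rewrite /address_s -!prod_par; try by move=> i; apply: dx_nz.
set X := \matrix_i x i; set Y := \matrix_i y i.
have uX : X \in unitmx by rewrite -row_free_unit.
have uY : Y \in unitmx by rewrite -row_free_unit.
set M := X *m invmx Y.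
have uM : M \in unitmx by rewrite unitmx_mul uX unitmx_inv.
have xe i : x i = \sum_j M i j *: y j.
  rewrite -(rowK x i) -/X -[X](mulmxKV uY) -/M row_mul mulmx_sum_row.
  by apply: eq_bigr => j _; rewrite rowK mxE.
have G : diag_mx (\row_i d (x i) (x i)) =
         M *m diag_mx (\row_j d (y j) (y j)) *m M^T.
  apply/matrixP => i k.
  have -> : diag_mx (\row_i d (x i) (x i)) i k = d (x i) (x k).
    rewrite !mxE; case: (eqVneq i k) => [->|ik]; first by rewrite mulr1n.
    by rewrite mulr0n ox.
  rewrite (xe i) (xe k) orth_sum // !mxE; apply: eq_bigr => j _.
  by rewrite mul_mx_diag !mxE mulrAC.
have := congr1 determinant G.
rewrite (det_mulmx (M *m _)) (det_mulmx M) det_tr !det_diag.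
under eq_bigr do rewrite mxE. under [X in _ = _ * X * _]eq_bigr do rewrite mxE.
move=> ->.
have dM : \det M != 0 by rewrite -unitfE -unitmxE.
have py : \prod_i d (y i) (y i) != 0.
  by apply/prodf_neq0 => i _; apply: dx_nz.
rewrite mulrAC -expr2 sq_mul ?sq_sqr ?expf_neq0 //.
Qed.

Lemma forward x y (A : 'M[K]_n) c :
  my_orthogonal_basis d x -> my_orthogonal_basis d y ->
  in_Isom_star d A c -> maps_lines_onto x y A ->
  (address_s d x = address_s d y) \/ (address_s d x = n - address_s d y)%N.
Proof.
move=> bx by_ [uA [cnz hd]] [mp _].
pose sig i := odflt i [pick j | (x i *m A == y j)%MS].
have hsig i : exists2 l, l != 0 & x i *m A = l *: y (sig i).
  rewrite /sig; case: pickP => [j /= hj | none]; last first.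
    by have [j hj] := mp i; move: (none j); rewrite hj.
  have /sub_rVP [l hl] : (x i *m A <= y j)%MS by case/andP: hj.
  exists l => //; apply/eqP => l0; move: hl; rewrite l0 scale0r => h.
  move: (dx_nz i bx); have := hd (x i) (x i); rewrite h d0l => /esym /eqP.
  by rewrite mulf_eq0 (negbTE cnz) /= => ->.
have key i : is_square (d (y (sig i)) (y (sig i))) =
             (is_square c == is_square (d (x i) (x i))).
  have [l ln hl] := hsig i; have := hd (x i) (x i).
  rewrite hl dZl dZr mulrA -expr2 => e.
  rewrite -sq_mul ?dx_nz // -e sq_mul ?sq_sqr ?expf_neq0 ?dx_nz //.
have sinj : injective sig.
  move=> i k e; apply/eqP; apply/negPn/negP => ik.
  have [l ln hl] := hsig i; have [m mn hm] := hsig k.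
  have := hd (x i) (x k); rewrite hl hm e dZl dZr (bx.2 i k ik) mulr0 => /eqP.
  by rewrite !mulf_eq0 (negbTE ln) (negbTE mn) (negbTE (dx_nz _ by_)).
rewrite /address_s.
case sc: (is_square c); [left | right].
  rewrite -(card_preimset [set j | ~~ is_square (d (y j) (y j))] sinj).
  by apply: eq_card => i; rewrite !inE key sc; case: is_square.
have -> : #|[set j | ~~ is_square (d (y j) (y j))]| =
          #|~: [set j | is_square (d (y j) (y j))]|.
  by apply: eq_card => j; rewrite !inE.
have -> : (n - #|~: [set j | is_square (d (y j) (y j))]|)%N =
          #|[set j | is_square (d (y j) (y j))]|.
  by rewrite [in RHS]cardsCs card_ord.
rewrite -(card_preimset [set j | is_square (d (y j) (y j))] sinj).
by apply: eq_card => i; rewrite !inE key sc; case: is_square.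
Qed.

Lemma construct x y c :
  my_orthogonal_basis d x -> my_orthogonal_basis d y -> c != 0 ->
  #|[set i | ~~ is_square (c * d (x i) (x i))]| = address_s d y ->
  exists A, in_Isom_star d A c /\ maps_lines_onto x y A.
Proof.
move=> bx by_ cnz hc.
have [sg hsg] := perm_exists hc.
have key i : is_square (c * d (x i) (x i)) = is_square (d (y (sg i)) (y (sg i))).
  by move: (hsg i); rewrite !inE => /negb_inj.
pose a i := c * d (x i) (x i).
have anz i : a i != 0 by rewrite mulf_neq0 ?dx_nz.
have ex i : exists k, k ^+ 2 * d (y (sg i)) (y (sg i)) == a i.
  have dyn := dx_nz (sg i) by_.
  have : is_square (a i / d (y (sg i)) (y (sg i))).
    have := sq_mul h2 dyn (invr_neq0 dyn); rewrite mulfV // sq1 => /esym/eqP hi.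
    by rewrite sq_mul ?invr_neq0 // key -hi.
  by case/existsP => k /eqP hk; exists k; rewrite hk divfK.
pose mu i := odflt 0 [pick k | k ^+ 2 * d (y (sg i)) (y (sg i)) == a i].
have hmu i : mu i ^+ 2 * d (y (sg i)) (y (sg i)) = a i.
  rewrite /mu; case: pickP => [k /eqP //|none].
  by have [k hk] := ex i; move: (none k); rewrite hk.
have munz i : mu i != 0.
  apply/eqP => m0; have := hmu i; rewrite m0 expr2 mulr0 mul0r => /eqP.
  by rewrite eq_sym (negbTE (anz i)).
set X := \matrix_i x i; set Y := \matrix_i y i.
have uX : X \in unitmx by rewrite -row_free_unit; case: bx.
have uY : Y \in unitmx by rewrite -row_free_unit; case: by_.
set Z := \matrix_i (mu i *: y (sg i)).
have uZ : Z \in unitmx.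
  have -> : Z = diag_mx (\row_i mu i) *m (perm_mx sg *m Y).
    by rewrite -row_permE; apply/matrixP => i j; rewrite mul_diag_mx !mxE.
  rewrite !unitmx_mul uY unitmx_perm unitmxE det_diag unitfE andbT.
  by rewrite andbT; apply/prodf_neq0 => i _; rewrite mxE.
pose A := invmx X *m Z.
have xA i : x i *m A = mu i *: y (sg i).
  by rewrite -(rowK x i) -/X -row_mul /A mulmxA mulmxV // mul1mx rowK.
have oz i k : i != k -> d (mu i *: y (sg i)) (mu k *: y (sg k)) = 0.
  move=> ik; rewrite dZl dZr by_.2 ?mulr0 //.
  by rewrite (inj_eq (@perm_inj _ sg)).
have gen (al be : 'I_n -> K) :
    d ((\sum_i al i *: x i) *m A) ((\sum_i be i *: x i) *m A) =
    c * d (\sum_i al i *: x i) (\sum_i be i *: x i).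
  rewrite !mulmx_suml.
  under eq_bigr do rewrite -scalemxAl xA.
  under [in X in d _ X]eq_bigr do rewrite -scalemxAl xA.
  rewrite (@orth_sum (fun i => mu i *: y (sg i)) al be) // orth_sum; last by case: bx.
  rewrite mulr_sumr; apply: eq_bigr => i _.
  by rewrite dZl dZr [mu i * (_ * _)]mulrA -expr2 hmu /a mulrCA.
exists A; split; last split.
- split; first by rewrite unitmx_mul unitmx_inv uX uZ.
  split => // u v.
  by rewrite (span u bx.1) (span v bx.1); exact: gen.
- move=> i; exists (sg i); rewrite xA; apply/eqmxP; exact: eqmx_scale.
- move=> j; exists ((sg^-1)%g j); rewrite xA permKV; apply/eqmxP; exact: eqmx_scale.
Qed.
End LA.

Unset Implicit Arguments.

Theorem corollary6p4 (K : finFieldType) (n : nat)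
  (d : 'rV[K]_n -> 'rV[K]_n -> K) (x y : 'I_n -> 'rV[K]_n) :
  (2%:R : K) != 0 ->
  is_bilinear_form d -> my_symmetric_form d -> my_nondegenerate_form d ->
  my_orthogonal_basis d x -> my_orthogonal_basis d y ->
  let s := address_s d x in
  let r := address_s d y in
  (odd n ->
     ((exists (A : 'M[K]_n) (c : K), in_Isom_star d A c /\ maps_lines_onto x y A)
      <-> s = r)) /\
  (~~ odd n ->
     ((exists (A : 'M[K]_n) (c : K), in_Isom_star d A c /\ maps_lines_onto x y A)
      <-> (s = r \/ s = (n - r)%N))).
Proof.
move=> h2 bil sym nd bx by_ s r.
have par : odd s = odd r := parity bil nd h2 bx by_.
have rle : (r <= n)%N by rewrite /r /address_s (leq_trans (max_card _)) ?card_ord.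
have sle : (s <= n)%N by rewrite /s /address_s (leq_trans (max_card _)) ?card_ord.
have bwd1 : s = r ->
    exists (A : 'M[K]_n) (c : K), in_Isom_star d A c /\ maps_lines_onto x y A.
  move=> hs; have [|A HA] := @construct _ _ _ bil nd h2 x y 1 bx by_ (oner_neq0 _).
    by rewrite -/r -hs /s /address_s; apply: eq_card => i; rewrite !inE mul1r.
  by exists A, 1.
have bwd2 : s = (n - r)%N ->
    exists (A : 'M[K]_n) (c : K), in_Isom_star d A c /\ maps_lines_onto x y A.
  move=> hs; have [e he] := ex_nonsq h2.
  have enz : e != 0.
    by apply: contraNneq he => ->; have := sq_sqr (0 : K); rewrite expr0n.
  have [|A HA] := @construct _ _ _ bil nd h2 x y e bx by_ enz.
    have e1 : #|[set i | ~~ is_square (e * d (x i) (x i))]| =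
              #|~: [set i | ~~ is_square (d (x i) (x i))]|.
      apply: eq_card => i; rewrite !inE sq_mul ?(dx_nz bil nd i bx) //.
      by rewrite (negbTE he); case: is_square.
    rewrite e1; have := cardsC [set i | ~~ is_square (d (x i) (x i))].
    move=> hn; rewrite card_ord in hn.
    have hs' : #|[set i | ~~ is_square (d (x i) (x i))]| = s by [].
    rewrite hs' hs in hn.
    by rewrite -(addKn (n - r) #|~: _|) hn subKn.
  by exists A, e.
split => on; split.
- move=> [A [c [hi hm]]]; case: (forward bil nd h2 bx by_ hi hm) => // hs.
  by move: par; rewrite /s hs -/r oddB // on; case: odd.
- exact: bwd1.
- by move=> [A [c [hi hm]]]; apply: (forward bil nd h2 bx by_ hi hm).
- by case; [exact: bwd1 | exact: bwd2].
Qed.
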